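(* For every $0<\gamma<1/100$ there exists $n_0$ such that for all $n\ge n_0$ the following holds. Suppose $H$ is a $3$-graph of order $n$ with $\delta_2(H)\ge(1/2-\gamma)n$. Let $X,Y$ be any bipartition of $V(H)$ with $|X|,|Y|\ge n/5$. If $H$ is not $3\gamma$-extremal, then $H$ has at least $\gamma^2n^3$ $XXY$-edges and at least $\gamma^2n^3$ $XYY$-edges.
   Context: A $3$-graph is a $3$-uniform hypergraph; $\delta_2(H)$ is the minimum over pairs of distinct vertices of the number of edges containing the pair. An $XXY$-edge is an edge with exactly two vertices in $X$ and one in $Y$; an $XYY$-edge has one vertex in $X$ and two in $Y$. For disjoint $A,B$, $\mathcal B[A,B]$ is the $3$-graph on $A\cup B$ whose edges are all triples with an odd number of vertices in $A$. $H$ $\gamma$-contains $H'$ (same vertex set $V$) if $|E(H')\setminus E(H)|\le\gamma|V|^3$. $H$ on $n$ vertices is $\gamma$-extremal if there is a partition $V(H)=A\cup B$ with $|A|=\lfloor n/2\rfloor$, $|B|=\lceil n/2\rceil$ such that $H$ $\gamma$-contains $\mathcal B[A,B]$. *)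

(* Defs.v *)
From HB Require Import structures.
From mathcomp Require Import all_boot all_order all_algebra.
Set Implicit Arguments. Unset Strict Implicit. Unset Printing Implicit Defensive.
Import Order.TTheory GRing.Theory Num.Theory.

Definition is_3graph (n : nat) (E : {set {set 'I_n}}) : Prop :=
  forall e, e \in E -> #|e| = 3.

Definition codeg (n : nat) (E : {set {set 'I_n}}) (x y : 'I_n) : nat :=
  #|[set e in E | (x \in e) && (y \in e)]|.

Definition edges_meeting (n : nat) (E : {set {set 'I_n}}) (X : {set 'I_n}) (k : nat)
  : {set {set 'I_n}} := [set e in E | #|e :&: X| == k].

(* XXY-edges: exactly two vertices in X (and one in Y = complement of X) *)
Definition XXY_edges n (E : {set {set 'I_n}}) (X : {set 'I_n}) := edges_meeting E X 2.
Definition XYY_edges n (E : {set {set 'I_n}}) (X : {set 'I_n}) := edges_meeting E X 1.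

(* B[A, B] with B = complement of A: all triples with an odd number of vertices in A *)
Definition Bgraph (n : nat) (A : {set 'I_n}) : {set {set 'I_n}} :=
  [set e : {set 'I_n} | (#|e| == 3) && odd #|e :&: A|].

Definition gcontains (R : realFieldType) (n : nat) (g : R)
  (E E' : {set {set 'I_n}}) : Prop :=
  (#|E' :\: E|%:R <= g * (n%:R) ^+ 3)%R.

Definition extremal (R : realFieldType) (n : nat) (g : R) (E : {set {set 'I_n}}) : Prop :=
  exists A : {set 'I_n}, #|A| = n./2 /\ #|~: A| = uphalf n /\ gcontains g E (Bgraph A).

(* Main.v *)
Require Import Defs.
From HB Require Import structures.
From mathcomp Require Import all_boot all_order all_algebra.
From mathcomp Require Import zify ring lra.
Import Order.TTheory GRing.Theory Num.Theory.

Lemma inj_count (T : finType) (G : {set {set T}}) (Rr Z : {set T}) j :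
  (forall t, t \in G -> Rr \subset t /\ t :\: Rr \subset Z /\ #|t :\: Rr| = j) ->
  #|G| <= 'C(#|Z|, j).
Proof.
move=> H.
have inj : {in G &, injective (fun t => t :\: Rr)}.
  move=> t1 t2 /H [s1 _] /H [s2 _] eq12.
  apply/setP => z; case: (boolP (z \in Rr)) => zR.
    by rewrite (subsetP s1 _ zR) (subsetP s2 _ zR).
  by have := congr1 (fun S : {set T} => z \in S) eq12; rewrite /= !inE zR.
rewrite -(card_in_imset inj) -cards_draws; apply: subset_leq_card.
apply/subsetP => s /imsetP [t tG ->]; have [_ [h1 h2]] := H t tG.
by rewrite inE h1 h2 eqxx.
Qed.

Lemma codegE n (G : {set {set 'I_n}}) x y :
  codeg G x y = \sum_(e in G) ((x \in e) && (y \in e)).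
Proof.
rewrite /codeg -sum1_card big_mkcond [RHS]big_mkcond /=.
apply: eq_bigr => e _; rewrite inE; by case: (e \in G); case: (x \in e); case: (y \in e).
Qed.

Lemma sum_in_card (T : finType) (S e : {set T}) :
  \sum_(x in S) (x \in e) = #|e :&: S|.
Proof.
rewrite -sum1_card big_mkcond [RHS]big_mkcond /=.
by apply: eq_bigr => x _; rewrite inE andbC; case: (x \in S); case: (x \in e).
Qed.

Lemma sum_codeg n (G : {set {set 'I_n}}) (S : {set 'I_n}) (T : 'I_n -> {set 'I_n}) :
 \sum_(x in S) \sum_(y in T x) codeg G x y =
 \sum_(e in G) \sum_(x in S) (x \in e) * #|e :&: T x|.
Proof.
under eq_bigr => x _ do under eq_bigr => y _ do rewrite codegE.
under eq_bigr => x _ do rewrite exchange_big.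
rewrite exchange_big; apply: eq_bigr => e _; apply: eq_bigr => x _.
rewrite -sum_in_card big_distrr /=; apply: eq_bigr => y _.
by case: (x \in e); case: (y \in e).
Qed.

Lemma sum_XY n (G : {set {set 'I_n}}) (S T : {set 'I_n}) :
 \sum_(x in S) \sum_(y in T) codeg G x y =
 \sum_(e in G) #|e :&: S| * #|e :&: T|.
Proof.
rewrite (@sum_codeg _ G S (fun _ => T)); apply: eq_bigr => e _.
by rewrite -[X in _ = X * _]sum_in_card big_distrl /=; apply: eq_bigr.
Qed.

Lemma sum_XX n (G : {set {set 'I_n}}) (S : {set 'I_n}) :
 \sum_(x in S) \sum_(y in S :\ x) codeg G x y =
 \sum_(e in G) #|e :&: S| * (#|e :&: S|).-1.
Proof.
rewrite (@sum_codeg _ G S (fun x => S :\ x)); apply: eq_bigr => e _.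
rewrite -[X in _ = X * _]sum_in_card big_distrl /=; apply: eq_bigr => x xS.
case xe: (x \in e) => //=; rewrite !mul1n.
by rewrite (cardsD1 x (e :&: S)) inE xe xS setIDA.
Qed.

Lemma cardIC (T : finType) (e X : {set T}) : #|e :&: ~: X| = #|e| - #|e :&: X|.
Proof. by rewrite -setDE -(cardsID X e) addKn. Qed.

Lemma sum_class_XY n (G : {set {set 'I_n}}) (X : {set 'I_n}) k :
  (forall e, e \in G -> #|e| = 3) ->
 \sum_(e in edges_meeting G X k) #|e :&: X| * #|e :&: ~: X| =
 #|edges_meeting G X k| * (k * (3 - k)).
Proof.
move=> H3; rewrite -sum_nat_const; apply: eq_bigr => e.
by rewrite inE => /andP [/H3 e3 /eqP ek]; rewrite cardIC e3 ek.
Qed.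

Lemma sum_class_XX n (G : {set {set 'I_n}}) (X : {set 'I_n}) k :
 \sum_(e in edges_meeting G X k) #|e :&: X| * (#|e :&: X|).-1 =
 #|edges_meeting G X k| * (k * k.-1).
Proof.
rewrite -sum_nat_const; apply: eq_bigr => e.
by rewrite inE => /andP [_ /eqP ->].
Qed.

Lemma codegU n (A B : {set {set 'I_n}}) x y : [disjoint A & B] ->
  codeg (A :|: B) x y = codeg A x y + codeg B x y.
Proof.
move=> dAB; rewrite !codegE -bigU //=.
by apply: eq_bigl => e; rewrite !inE.
Qed.

Lemma codeg_le n (G : {set {set 'I_n}}) (Z : {set 'I_n}) x y : x != y ->
  (forall t, t \in G -> x \in t -> y \in t -> #|t| = 3 /\ t :\: [set x; y] \subset Z) ->
  codeg G x y <= #|Z|.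
Proof.
move=> nxy H; rewrite -(bin1 #|Z|); apply: (@inj_count _ _ [set x; y]) => t.
rewrite inE => /andP [tG /andP [xt yt]]; have [t3 tZ] := H t tG xt yt.
have sub : [set x; y] \subset t.
  by apply/subsetP => z; rewrite !inE => /orP [] /eqP ->.
split=> //; split=> //; rewrite cardsD t3.
have -> : t :&: [set x; y] = [set x; y] by apply/setIidPr.
by rewrite cards2 nxy.
Qed.

Lemma codeg_split n (G : {set {set 'I_n}}) (X : {set 'I_n}) k1 k2 x y :
  (forall e, e \in G -> x \in e -> y \in e -> (#|e :&: X| == k1) || (#|e :&: X| == k2)) ->
  codeg G x y <= codeg (edges_meeting G X k1) x y + codeg (edges_meeting G X k2) x y.
Proof.
move=> H; rewrite /codeg; apply: leq_trans (_ : _ <= #|[set e in edges_meeting G X k1 | (x \in e) && (y \in e)] :|: [set e in edges_meeting G X k2 | (x \in e) && (y \in e)]|) _.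
  apply: subset_leq_card; apply/subsetP => e; rewrite !inE => /andP [eG /andP [xe ye]].
  by rewrite eG xe ye /=; case/orP: (H e eG xe ye) => ->; rewrite ?orbT.
by rewrite cardsU leq_subr.
Qed.

Lemma card3_in n (e X : {set 'I_n}) : #|e| = 3 -> #|e :&: X| <= 3.
Proof. by move=> <-; apply: subset_leq_card; apply: subsetIl. Qed.

Lemma P1 n (E : {set {set 'I_n}}) (X : {set 'I_n}) x y : is_3graph E -> x \in X -> y \notin X ->
  codeg E x y <= codeg (edges_meeting E X 1) x y + codeg (edges_meeting E X 2) x y.
Proof.
move=> hE xX yX; apply: codeg_split => e eE xe ye.
have e3 := hE e eE.
have h1 : 0 < #|e :&: X| by apply/card_gt0P; exists x; rewrite inE xe xX.
have h2 : 0 < #|e :&: ~: X| by apply/card_gt0P; exists y; rewrite inE ye inE yX.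
move: h2; rewrite cardIC e3; move: h1; case: #|e :&: X| => [|[|[|[|k]]]] //.
Qed.

Lemma P3 n (E : {set {set 'I_n}}) (X : {set 'I_n}) x y : is_3graph E -> x \in X -> y \in X -> x != y ->
  codeg E x y <= codeg (edges_meeting E X 3) x y + codeg (edges_meeting E X 2) x y.
Proof.
move=> hE xX yX nxy; apply: codeg_split => e eE xe ye.
have e3 := hE e eE.
have h1 : 2 <= #|e :&: X|.
  have <- : #|[set x; y]| = 2 by rewrite cards2 nxy.
  apply: subset_leq_card.
  by apply/subsetP => z; rewrite !inE => /orP [] /eqP ->; rewrite ?xe ?ye ?xX ?yX.
move: (@card3_in _ e X e3) h1; case: #|e :&: X| => [|[|[|[|k]]]] //.
Qed.

Lemma em_sub n (G : {set {set 'I_n}}) X k : edges_meeting G X k \subset G.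
Proof. by apply/subsetP => e; rewrite inE => /andP []. Qed.

Lemma P24 n (E F : {set {set 'I_n}}) (X Z : {set 'I_n}) k x y : x != y ->
 [disjoint F & E] -> (forall e, e \in F -> #|e| = 3) -> is_3graph E ->
 (forall t : {set 'I_n}, #|t| = 3 -> #|t :&: X| = k -> x \in t -> y \in t ->
      t :\: [set x; y] \subset Z) ->
 codeg (edges_meeting F X k) x y + codeg (edges_meeting E X k) x y <= #|Z|.
Proof.
move=> nxy dFE hF hE H; rewrite -codegU; last first.
  exact: (disjointW (@em_sub _ F X k) (@em_sub _ E X k) dFE).
apply: codeg_le => // t; rewrite !inE => /orP [] /andP [tG /eqP tk] xt yt.
  by have t3 := hF t tG; split => //; apply: H.
by have t3 := hE t tG; split => //; apply: H.
Qed.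

Lemma Z2 n (X : {set 'I_n}) (t : {set 'I_n}) x y : x \in X -> y \notin X ->
  #|t :&: X| = 1 -> x \in t -> t :\: [set x; y] \subset ~: X.
Proof.
move=> xX yX t1 xt; apply/subsetP => z; rewrite !inE => /andP [/norP [zx zy] zt].
apply/negP => zX.
have : #|[set x; z]| <= #|t :&: X|.
  apply: subset_leq_card; apply/subsetP => w; rewrite !inE => /orP [] /eqP ->.
  - by rewrite xt xX.
  - by rewrite zt zX.
by rewrite cards2 t1 eq_sym zx.
Qed.

Lemma Z4 n (X : {set 'I_n}) (t : {set 'I_n}) x y :
  #|t| = 3 -> #|t :&: X| = 3 -> t :\: [set x; y] \subset X.
Proof.
move=> t3 tX; have := cardsID X t; rewrite tX t3 => h.
have t0 : t :\: X = set0 by apply: cards0_eq; lia.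
apply/subsetP => z; rewrite !inE => /andP [_ zt].
apply/negP => /negP zX; have : z \in t :\: X by rewrite inE zX zt.
by rewrite t0 inE.
Qed.

Section Core.
Variables (n : nat) (E : {set {set 'I_n}}) (X : {set 'I_n}).
Hypothesis hE : is_3graph E.
Let F := Bgraph X :\: E.
Let Ek k := edges_meeting E X k.
Let Fk k := edges_meeting F X k.

Lemma hF : forall e, e \in F -> #|e| = 3.
Proof. by move=> e; rewrite !inE => /andP [_ /andP [/eqP ->]]. Qed.

Lemma dFE : [disjoint F & E].
Proof. by rewrite disjoint_subset; apply/subsetP => e; rewrite !inE => /andP [->]. Qed.

Lemma S1 : \sum_(x in X) \sum_(y in ~: X) codeg E x y <= 2 * #|Ek 1| + 2 * #|Ek 2|.
Proof.
apply: leq_trans (_ : _ <= \sum_(x in X) \sum_(y in ~: X)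
   (codeg (Ek 1) x y + codeg (Ek 2) x y)) _.
  apply: leq_sum => x xX; apply: leq_sum => y; rewrite inE => yX; exact: P1.
rewrite (eq_bigr (fun x => \sum_(y in ~: X) codeg (Ek 1) x y + \sum_(y in ~: X) codeg (Ek 2) x y)); last by move=> x _; rewrite big_split.
rewrite big_split /= !sum_XY !sum_class_XY //; first by rewrite mulnC [_ * (2 * _)]mulnC.
Qed.

Lemma S2 : 2 * #|Fk 1| + 2 * #|Ek 1| <= #|X| * (#|~: X| * #|~: X|).
Proof.
have -> : 2 * #|Fk 1| + 2 * #|Ek 1| =
   \sum_(x in X) \sum_(y in ~: X) (codeg (Fk 1) x y + codeg (Ek 1) x y).
  rewrite (eq_bigr (fun x => \sum_(y in ~: X) codeg (Fk 1) x y + \sum_(y in ~: X) codeg (Ek 1) x y)); last by move=> x _; rewrite big_split.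
  rewrite big_split /= !sum_XY !sum_class_XY //; last exact: hF.
  by rewrite /Fk /Ek /=; lia.
rewrite -sum_nat_const; apply: leq_sum => x xX.
rewrite -sum_nat_const; apply: leq_sum => y; rewrite inE => yX.
apply: (@P24 _ E F X (~: X) 1 x y) => //; first by apply: contraNneq yX => <-.
- exact: dFE.
- exact: hF.
- by move=> t _ t1 xt _; apply: Z2.
Qed.

Lemma S3 : \sum_(x in X) \sum_(y in X :\ x) codeg E x y <= 6 * #|Ek 3| + 2 * #|Ek 2|.
Proof.
apply: leq_trans (_ : _ <= \sum_(x in X) \sum_(y in X :\ x)
   (codeg (Ek 3) x y + codeg (Ek 2) x y)) _.
  apply: leq_sum => x xX; apply: leq_sum => y; rewrite !inE => /andP [yx yX].
  by apply: P3; rewrite // eq_sym.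
rewrite (eq_bigr (fun x => \sum_(y in X :\ x) codeg (Ek 3) x y + \sum_(y in X :\ x) codeg (Ek 2) x y)); last by move=> x _; rewrite big_split.
by rewrite big_split /= !sum_XX !sum_class_XX mulnC [_ * (2 * _)]mulnC.
Qed.

Lemma S4 : 6 * #|Fk 3| + 6 * #|Ek 3| <= #|X| * (#|X|.-1 * #|X|).
Proof.
have -> : 6 * #|Fk 3| + 6 * #|Ek 3| =
   \sum_(x in X) \sum_(y in X :\ x) (codeg (Fk 3) x y + codeg (Ek 3) x y).
  rewrite (eq_bigr (fun x => \sum_(y in X :\ x) codeg (Fk 3) x y + \sum_(y in X :\ x) codeg (Ek 3) x y)); last by move=> x _; rewrite big_split.
  rewrite big_split /= !sum_XX !sum_class_XX.
  by rewrite /Fk /Ek /=; lia.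
rewrite -sum_nat_const; apply: leq_sum => x xX.
have -> : #|X|.-1 = #|X :\ x| by rewrite (cardsD1 x X) xX.
rewrite -sum_nat_const; apply: leq_sum => y; rewrite !inE => /andP [yx yX].
apply: (@P24 _ E F X X 3 x y) => //; first by rewrite eq_sym.
- exact: dFE.
- exact: hF.
- by move=> t t3 t1 _ _; apply: Z4.
Qed.

Lemma S5 : #|F| <= #|Fk 1| + #|Fk 3|.
Proof.
apply: leq_trans (_ : #|F| <= #|Fk 1 :|: Fk 3|) _; last by rewrite cardsU leq_subr.
apply: subset_leq_card; apply/subsetP => e eF.
have := eF; rewrite !inE => /andP [eE /andP [/eqP e3 odd3]].
rewrite eE e3 odd3 /=; move: (@card3_in _ e X e3) odd3.
by case: #|e :&: X| => [|[|[|[|k]]]].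
Qed.
End Core.

Lemma Sv_bound n (v : 'I_n) : #|[set t : {set 'I_n} | (#|t| == 3) && (v \in t)]| <= 'C(n, 2).
Proof.
rewrite -[X in _ <= 'C(X, _)](card_ord n) -cardsT; apply: (@inj_count _ _ [set v]) => t.
rewrite inE => /andP [/eqP t3 vt]; split; first by rewrite sub1set.
split; first exact: subsetT.
by rewrite cardsD t3 (setIidPr _) ?cards1 // sub1set.
Qed.

Lemma meet_bound n (D : {set 'I_n}) :
  #|[set t : {set 'I_n} | (#|t| == 3) && ~~ [disjoint t & D]]| <= #|D| * 'C(n, 2).
Proof.
rewrite -sum1_card big_mkcond /=.
apply: leq_trans (_ : _ <= \sum_(t : {set 'I_n}) \sum_(v in D) ((#|t| == 3) && (v \in t))) _.
  apply: leq_sum => t _; rewrite inE.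
  case t3: (#|t| == 3) => //=; case: (boolP [disjoint t & D]) => //= /negP dtD.
  rewrite sum_in_card; rewrite lt0n; apply/negP => /eqP /cards0_eq h; apply: dtD.
  by rewrite -setI_eq0 h.
rewrite exchange_big /= -sum_nat_const; apply: leq_sum => v _.
apply: leq_trans _ (Sv_bound _ v); rewrite -sum1_card [X in _ <= X]big_mkcond /=.
by apply: leq_sum => t _; rewrite inE; case: (_ && _).
Qed.

Lemma move_bound n (E : {set {set 'I_n}}) (X A : {set 'I_n}) :
 #|Bgraph A :\: E| <= #|Bgraph X :\: E| + #|(A :\: X) :|: (X :\: A)| * 'C(n, 2).
Proof.
set D := (A :\: X) :|: (X :\: A).
apply: leq_trans (_ : _ <= #|(Bgraph X :\: E) :|: [set t : {set 'I_n} | (#|t| == 3) && ~~ [disjoint t & D]]|) _.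
  apply: subset_leq_card; apply/subsetP => t; rewrite !inE => /andP [tE /andP [t3 todd]].
  rewrite t3 tE /=; case: (boolP [disjoint t & D]) => //= dtD; rewrite ?orbF ?orbT //.
  have -> : t :&: X = t :&: A; last by [].
  apply/setP => z; rewrite !inE; case zt: (z \in t) => //=.
  have : z \notin D.
    by move: dtD; rewrite disjoints_subset => /subsetP /(_ z); rewrite zt inE; apply.

  by rewrite !inE; case: (z \in A); case: (z \in X).
by rewrite cardsU; apply: leq_trans (leq_subr _ _) _; rewrite leq_add2l meet_bound.
Qed.

Lemma exists_subset (T : finType) (B : {set T}) k : k <= #|B| ->
  exists C : {set T}, C \subset B /\ #|C| = k.
Proof.
move=> kB; have : 0 < 'C(#|B|, k) by rewrite bin_gt0.
rewrite -(cards_draws B k) => /card_gt0P [C]; rewrite inE => /andP [sub /eqP ck].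
by exists C.
Qed.

Lemma choose_A n (X : {set 'I_n}) k : k <= n -> exists A : {set 'I_n},
  #|A| = k /\ #|(A :\: X) :|: (X :\: A)| <= (#|X| - k) + (k - #|X|).
Proof.
move=> kn; have cX := cardsC X; rewrite card_ord in cX.
case: (leqP k #|X|) => hk.
  have [C [CX Ck]] := exists_subset _ _ _ hk; exists C; split => //.
  have -> : C :\: X = set0 by apply/setP => z; rewrite !inE; apply/negbTE; apply/negP => /andP [zX zC]; by rewrite (subsetP CX _ zC) in zX.
  rewrite set0U cardsD (setIidPr CX) Ck; lia.
have hk' : k - #|X| <= #|~: X| by lia.
have [C [CX Ck]] := exists_subset _ _ _ hk'; exists (X :|: C).
have dXC : X :&: C = set0.
  apply/setP => z; rewrite !inE; apply/negbTE; apply/negP => /andP [zX zC]; have := subsetP CX _ zC; by rewrite inE zX.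
split.
  by rewrite cardsU dXC cards0 Ck; lia.
have -> : X :\: (X :|: C) = set0 by apply/setP => z; rewrite !inE; case: (z \in X); rewrite ?andbF.
rewrite setU0 setDUl setDv set0U.
apply: leq_trans (subset_leq_card (subsetDl C X)) _; rewrite Ck; lia.
Qed.

Lemma uphalf_sub n : n - n./2 = uphalf n.
Proof. have := odd_double_half n; rewrite uphalf_half -addnn; lia. Qed.

Local Open Scope ring_scope.

Lemma stepb (R : realFieldType) (g n a b m f1 : R) :
 0 < g -> g < 1/100 -> 0 < n -> a + b = n -> n/5 <= a -> n/5 <= b ->
 m < g^+2 * n^+3 -> 0 <= f1 ->
 a*b*((1/2-g)*n) + 2 * f1 <= a*b*b + 2 * m -> n/2 - 3/2 * g * n <= b.
Proof.
move=> g0 g1 n0 ab an bn mlt f0 H.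
rewrite leNgt; apply/negP => bl.
have hab : n^+2/25 <= a * b by nra.
have hu : g * n / 2 <= (1/2-g)*n - b by lra.
have h3 : n^+2/25 * (g*n/2) <= a * b * ((1/2-g)*n - b).
  apply: ler_pM => //; [nra|nra].
have h4 : 2 * (g^+2 * n^+3) <= n^+2/25 * (g*n/2).
  have n3 : 0 < n^+3 by rewrite exprn_gt0.
  have h5 : 0 <= n^+3 * (g * (1/50 - 2 * g)).
    by apply: mulr_ge0; [lra| apply: mulr_ge0; lra].
  have -> : n^+2/25 * (g*n/2) = n^+3 * g / 50 by field.
  nra.
nra.
Qed.

Lemma stepa (R : realFieldType) (g n a m f3 : R) :
 0 < g -> g < 1/100 -> 10 <= n -> n/5 <= a ->
 m < g^+2 * n^+3 -> 0 <= f3 ->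
 a*(a-1)*((1/2-g)*n) + 6 * f3 <= a*(a-1)*a + 2 * m -> n/2 - 2 * g * n <= a.
Proof.
move=> g0 g1 n10 an mlt f0 H.
rewrite leNgt; apply/negP => al.
have hab : n/5 * (n/10) <= a * (a - 1) by apply: ler_pM; lra.
have hu : g * n <= (1/2-g)*n - a by lra.
have h3 : n/5 * (n/10) * (g*n) <= a * (a-1) * ((1/2-g)*n - a).
  apply: ler_pM => //; [nra|nra].
have h4 : 2 * (g^+2 * n^+3) <= n/5 * (n/10) * (g*n).
  have n3 : 0 < n^+3 by rewrite exprn_gt0; lra.
  have h5 : 0 <= n^+3 * (g * (1/50 - 2 * g)).
    by apply: mulr_ge0; [lra| apply: mulr_ge0; lra].
  have -> : n/5 * (n/10) * (g*n) = n^+3 * g / 50 by field.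
  nra.
nra.
Qed.

Lemma f1b (R : realFieldType) (g n a b m f1 : R) :
 0 < g -> 0 <= a -> 0 <= b -> a + b = n -> n/2 - 2 * g * n <= a ->
 a*b*((1/2-g)*n) + 2 * f1 <= a*b*b + 2 * m -> f1 <= 3/8 * g * n^+3 + m.
Proof.
move=> g0 a0 b0 ab an H.
have h1 : a * b * (b - (1/2-g)*n) <= a * b * (3 * g * n).
  by apply: ler_wpM2l; [apply: mulr_ge0|lra].
have h2 : a * b <= n^+2/4.
  have := sqr_ge0 (a - b); rewrite -ab; nra.
have h3 : a * b * (3 * g * n) <= n^+2/4 * (3 * g * n).
  by apply: ler_wpM2r => //; apply: mulr_ge0; [apply: mulr_ge0|]; lra.
have -> : 3/8 * g * n^+3 = n^+2/4 * (3 * g * n) / 2 by field.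
nra.
Qed.

Lemma f3b (R : realFieldType) (g n a m f3 : R) :
 0 < g -> 1 <= a -> a <= n -> n/2 - 3/2 * g * n <= n - a ->
 a*(a-1)*((1/2-g)*n) + 6 * f3 <= a*(a-1)*a + 2 * m -> f3 <= 5/12 * g * n^+3 + m/3.
Proof.
move=> g0 a1 an bn H.
have h0 : 0 <= a * (a-1) by apply: mulr_ge0; lra.
have h1 : a * (a-1) * (a - (1/2-g)*n) <= a * (a-1) * (5/2 * g * n).
  by apply: ler_wpM2l => //; lra.
have h2 : a * (a-1) <= n^+2 by rewrite expr2; apply: ler_pM; lra.
have h3 : a * (a-1) * (5/2 * g * n) <= n^+2 * (5/2 * g * n).
  by apply: ler_wpM2r => //; apply: mulr_ge0; [apply: mulr_ge0|]; lra.
have -> : 5/12 * g * n^+3 = n^+2 * (5/2 * g * n) / 6 by field.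
nra.
Qed.

Lemma final (R : realFieldType) (g n m f1 f3 D C2 FF : R) :
 0 < g -> g < 1/100 -> 0 <= n -> 1 <= n * g -> m < g^+2 * n^+3 ->
 f1 <= 3/8 * g * n^+3 + m -> f3 <= 5/12 * g * n^+3 + m/3 ->
 0 <= D -> D <= 2 * g * n + 1/2 -> 0 <= C2 -> C2 <= n^+2/2 ->
 FF <= f1 + f3 + D * C2 -> FF <= 3 * g * n^+3.
Proof.
move=> g0 g1 n0 ng mlt h1 h3 D0 D1 C0 C1 HF.
have hDC : D * C2 <= (2 * g * n + 1/2) * (n^+2/2) by apply: ler_pM.
have hn2 : n^+2 <= g * n^+3.
  have : n^+2 * 1 <= n^+2 * (n * g) by apply: ler_wpM2l => //; apply: sqr_ge0.
  have e : n^+2 * (n * g) = g * n^+3 by ring.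
  by rewrite mulr1 e.
have hm : g^+2 * n^+3 <= g * n^+3 / 100.
  have n3 : 0 <= n^+3 by apply: exprn_ge0.
  have : g^+2 * n^+3 <= (g / 100) * n^+3 by apply: ler_wpM2r => //; rewrite expr2; nra.
  by move=> h; apply: (le_trans h); lra.
have e : (2 * g * n + 1/2) * (n^+2/2) = g * n^+3 + n^+2/4 by field.
rewrite e in hDC.
lra.
Qed.

Lemma sum_lb (R : realFieldType) n (E : {set {set 'I_n}}) (S : {set 'I_n})
   (T : 'I_n -> {set 'I_n}) (d : R) :
 (forall x y, x \in S -> y \in T x -> d <= (codeg E x y)%:R) ->
 \sum_(x in S) (d *+ #|T x|) <= (\sum_(x in S) \sum_(y in T x) codeg E x y)%:R.
Proof.
move=> H; rewrite natr_sum; apply: ler_sum => x xS.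
rewrite natr_sum -sumr_const; apply: ler_sum => y yT; exact: H.
Qed.

Lemma bin2_le n : (2 * 'C(n, 2) <= n * n)%N.
Proof.
rewrite bin2; have h := odd_double_half (n * n.-1).
have h2 : (n * n.-1 <= n * n)%N by apply: leq_mul => //; apply: leq_pred.
rewrite -muln2 in h; lia.
Qed.

Lemma trunc_sub_bound (R : realFieldType) (a k : nat) (u v : R) :
  a%:R - k%:R <= u -> k%:R - a%:R <= v -> 0 <= u -> 0 <= v ->
  ((a - k) + (k - a))%N%:R <= Num.max u v.
Proof.
move=> h1 h2 u0 v0; case: (leqP k a) => ka.
  have -> : (k - a = 0)%N by apply/eqP; rewrite subn_eq0.
  by rewrite addn0 natrB // le_max h1.
have -> : (a - k = 0)%N by apply/eqP; rewrite subn_eq0 ltnW.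
by rewrite add0n natrB ?(ltnW ka) // le_max h2 orbT.
Qed.

Lemma kn_lem n : (n./2 <= n)%N.
Proof. have := odd_double_half n. rewrite -muln2. lia. Qed.
Lemma hk_lem n : (n./2 * 2 <= n <= n./2 * 2 + 1)%N.
Proof. have := odd_double_half n. rewrite -muln2. case: (odd n) => /= h; apply/andP; split; lia. Qed.
Lemma compl_card n (A : {set 'I_n}) : #|A| = n./2 -> #|~: A| = uphalf n.
Proof.
move=> Ak; have := cardsC A; rewrite card_ord Ak => h.
have := uphalf_sub n; rewrite -{1}h addKn => ->. done.
Qed.

Lemma core (R : realFieldType) (g : R) n (E : {set {set 'I_n}}) (X : {set 'I_n}) :
 0 < g -> g < 1 / 100%:R -> (10 <= n)%N -> 1 <= n%:R * g -> is_3graph E ->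
 (forall x y : 'I_n, x != y -> (1 / 2%:R - g) * n%:R <= (codeg E x y)%:R) ->
 (n%:R / 5%:R : R) <= #|X|%:R -> (n%:R / 5%:R : R) <= #|~: X|%:R ->
 (#|XXY_edges E X|%:R < g ^+ 2 * n%:R ^+ 3) -> extremal (3%:R * g) E.
Proof.
move=> g0 g1 n10 ng hE hc aX bX mlt.
have cX : (#|X| + #|~: X| = n)%N by rewrite cardsC card_ord.
have cXR : (#|X|%:R + #|~: X|%:R = n%:R :> R) by rewrite -natrD cX.
have n10R : (10 <= n%:R :> R) by rewrite (ler_nat R 10 n).
set d := (1 / 2%:R - g) * n%:R.
set F := Bgraph X :\: E.
have hs1 : #|X|%:R * (#|~: X|%:R * d) <=
   (\sum_(x in X) \sum_(y in ~: X) codeg E x y)%:R.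
  apply: le_trans (@sum_lb R n E X (fun _ => ~: X) d _) => /=.
    have -> : \sum_(x in X) d *+ #|~: X| = #|X|%:R * (#|~: X|%:R * d).
      by rewrite sumr_const -[d *+ _]mulr_natl -[(_ * d) *+ _]mulr_natl.
    by [].
  move=> x y xX; rewrite inE => yX; apply: hc; by apply: contraNneq yX => <-.
have apos : (0 < #|X|)%N by rewrite -(ltr_nat R); apply: lt_le_trans aX; lra.
have hs3 : #|X|%:R * ((#|X|%:R - 1) * d) <=
   (\sum_(x in X) \sum_(y in X :\ x) codeg E x y)%:R.
  apply: le_trans (@sum_lb R n E X (fun x => X :\ x) d _) => /=.
    rewrite (eq_bigr (fun _ => d *+ #|X|.-1)); last first.
      by move=> x xX; rewrite (cardsD1 x X) xX.
    have -> : \sum_(x in X) d *+ #|X|.-1 = #|X|%:R * ((#|X|%:R - 1) * d).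
      rewrite sumr_const -[d *+ _]mulr_natl -[(_ * d) *+ _]mulr_natl.
      have e : (#|X|%:R - 1 : R) = #|X|.-1%:R.
        by rewrite -[in LHS](prednK apos) -natr1 addrK.
      by rewrite e.
    by [].
  move=> x y xX; rewrite !inE => /andP [yx _]; apply: hc; by rewrite eq_sym.
have s1 := @S1 n E X hE; have s2 := @S2 n E X hE; have s3 := @S3 n E X hE; have s4 := @S4 n E X hE.
have s5 := @S5 n E X.
rewrite -(ler_nat R) natrD !natrM in s1.
rewrite -(ler_nat R) natrD !natrM in s2.
rewrite -(ler_nat R) natrD !natrM in s3.
rewrite -(ler_nat R) natrD !natrM in s4.
rewrite -(ler_nat R) natrD in s5.
have e : (#|X|.-1%:R : R) = #|X|%:R - 1.
  by rewrite -[in RHS](prednK apos) -natr1 addrK.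
rewrite e in s4.
move: mlt; rewrite /XXY_edges => mlt.
set m := #|edges_meeting E X 2|%:R in s1 s3 mlt.
set e1 := #|edges_meeting E X 1|%:R in s1 s2.
set e3 := #|edges_meeting E X 3|%:R in s3 s4.
set f1 := #|edges_meeting F X 1|%:R in s2 s5.
set f3 := #|edges_meeting F X 3|%:R in s4 s5.
set a := #|X|%:R in aX cXR hs1 hs3 s2 s4.
set b := #|~: X|%:R in bX cXR hs1 s2.
have f10 : 0 <= f1 by apply: ler0n.
have f30 : 0 <= f3 by apply: ler0n.
have m0 : 0 <= m by apply: ler0n.
have hA : a * b * d + 2 * f1 <= a * b * b + 2 * m.
  have : a * (b * d) <= 2 * e1 + 2 * m by apply: le_trans hs1 s1.
  rewrite mulrA; lra.
have hB : a * (a - 1) * d + 6 * f3 <= a * (a - 1) * a + 2 * m.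
  have : a * ((a - 1) * d) <= 6 * e3 + 2 * m by apply: le_trans hs3 s3.
  rewrite mulrA. rewrite mulrA in s4. lra.
have n0 : 0 < n%:R :> R by lra.
have a0 : 0 <= a by apply: ler0n.
have b0 : 0 <= b by apply: ler0n.
have hb := @stepb R _ _ _ _ _ _ g0 g1 n0 cXR aX bX mlt f10 hA.
have ha := @stepa R _ _ _ _ _ g0 g1 n10R aX mlt f30 hB.
have hf1 := @f1b R _ _ _ _ _ _ g0 a0 b0 cXR ha hA.
have hf3' : f3 <= 5 / 12 * g * n%:R ^+ 3 + m / 3.
  by apply: (@f3b R _ _ _ _ _ g0 _ _ _ hB); lra.
have kn := kn_lem n.
have [A [Ak AD]] := @choose_A n X _ kn.
exists A; split => //; split.
  exact: compl_card.
rewrite /gcontains.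
have mb := @move_bound n E X A.
rewrite -(ler_nat R) natrD natrM in mb.
have hk := hk_lem n.
move: hk => /andP []; rewrite -!(ler_nat R) natrD !natrM => hk1 hk2.
have hD := @trunc_sub_bound R #|X| n./2 (3/2 * g * n%:R + 1/2) (2 * g * n%:R) _ _ _ _.
rewrite -/a in hD.
have hDa : #|A :\: X :|: X :\: A|%:R <= 2 * g * n%:R + 1/2 :> R.
  rewrite -(ler_nat R) in AD; apply: (le_trans AD); apply: le_trans (hD _ _ _ _) _; try lra.
  rewrite ge_max; apply/andP; split; lra.
have hC : ('C(n, 2)%:R : R) <= n%:R ^+ 2 / 2.
  have := bin2_le n; rewrite -(ler_nat R) !natrM => h.
  rewrite expr2; lra.
apply: (@final R g n%:R m f1 f3 _ _ _ g0 g1 _ ng mlt hf1 hf3' _ hDa _ hC).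
- exact: ler0n.
- exact: ler0n.
- exact: ler0n.
- by apply: (le_trans mb); rewrite lerD2r.
Qed.

Lemma xyy_eq n (E : {set {set 'I_n}}) (X : {set 'I_n}) : is_3graph E ->
  XYY_edges E X = XXY_edges E (~: X).
Proof.
move=> hE; apply/setP => e; rewrite !inE; case eE: (e \in E) => //=.
by rewrite cardIC (hE e eE); move: (@card3_in _ e X (hE e eE)); case: #|e :&: X| => [|[|[|[|k]]]].
Qed.

Theorem lemma3p3 (R : archiRealFieldType) (g : R) :
  0 < g -> g < 1 / 100%:R ->
  exists n0 : nat, forall (n : nat), (n0 <= n)%N ->
  forall E : {set {set 'I_n}}, is_3graph E ->
  (forall x y : 'I_n, x != y -> (1 / 2%:R - g) * n%:R <= (codeg E x y)%:R) ->
  forall X : {set 'I_n},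
  (n%:R / 5%:R : R) <= #|X|%:R -> (n%:R / 5%:R : R) <= #|~: X|%:R ->
  ~ extremal (3%:R * g : R) E ->
  g ^+ 2 * n%:R ^+ 3 <= #|XXY_edges E X|%:R /\
  g ^+ 2 * n%:R ^+ 3 <= #|XYY_edges E X|%:R.
Proof.
move=> g0 g1.
have hb : 1 / g < (Num.Def.archi_bound (1 / g))%:R.
  by apply: archi_boundP; apply: ltW; rewrite divr_gt0.
exists (maxn 10 (Num.Def.archi_bound (1 / g))) => n; rewrite geq_max => /andP [n10 nb].
move=> E hE hc X aX bX nex.
have ng : 1 <= n%:R * g.
  have : 1 / g <= n%:R by apply: (le_trans (ltW hb)); rewrite ler_nat.
  by rewrite ler_pdivrMr // mulrC.
split.
  rewrite leNgt; apply/negP => lt; apply: nex; exact: (@core R g n E X g0 g1 n10 ng hE hc aX bX lt).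
rewrite xyy_eq // leNgt; apply/negP => lt; apply: nex.
apply: (@core R g n E (~: X) g0 g1 n10 ng hE hc bX _ lt); by rewrite setCK.
Qed.
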